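(* Consider Method 1.4 (described in the context) and suppose it does not terminate and the generated sequence $\{x_k\}_{k\in K}$ is bounded. Then every limit point of $\{x_k\}_{k\in K}$ belongs to $X^*$.
   Context: Setting: $f_j$, $j\in J=\{1,\dots,m\}$, convex on $\mathbb{R}^n$ with $D_j=\{x:f_j(x)\le0\}$ having nonempty interior; $D=\{x:f_j(x)\le0\ \forall j\}$; $f$ continuous, attaining its minimum on $D$. Notation: $K=\{0,1,\dots\}$, $f^*=\min_Df$, $X^*=\{x\in D: f(x)=f^*\}$, $W^1(x,D_j)=\{a:\|a\|=1,\ \langle a,z-x\rangle\le0\ \forall z\in D_j\}$. Method 1.4: choose a closed convex $M_0\subset\mathbb{R}^n$ containing at least one point of $X^*$, points $y^j\in\operatorname{int}D_j$, a constant $q\ge1$, and a point $x_0\in M_0$ with $f(x_0)\le f^*$. Given $x_k$: Step 1: if $x_k\in D$, stop. Step 2: $J_k=\{j:x_k\notin D_j\}$. Step 3: for $j\in J_k$ choose $z_k^j$ in the open segment $(y^j,x_k)$ with $z_k^j\notin\operatorname{int}D_j$ and $x_k+q_k^j(z_k^j-x_k)\in D_j$ for some $q_k^j\in[1,q]$. Step 4: for $j\in J_k$ choose a nonempty finite $A_k^j\subset W^1(z_k^j,D_j)$, set $M_k^j=M_k\cap\{x:\langle a,x-z_k^j\rangle\le0\ \forall a\in A_k^j\}$ and choose $u_k^j\in M_k^j$ with $f(u_k^j)\le f^*$. Step 5: find $j_k\in J_k$ with $\|x_k-z_k^{j_k}\|=\max_{j\in J_k}\|x_k-z_k^j\|$.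 Step 6: $J_k'=\{j\in J_k: u_k^j\in M_k^{j_k}\}$; find $l_k\in J_k'$ with $f(u_k^{l_k})=\max_{j\in J_k'}f(u_k^j)$. Step 7: $M_{k+1}=M_k^{j_k}\cap\{x:\langle a,x-z_k^{l_k}\rangle\le0\ \forall a\in A_k^{l_k}\}$, $x_{k+1}=u_k^{l_k}$. *)

(* Defs.v *)
From mathcomp Require Import all_boot all_order all_algebra.
From mathcomp Require Import reals.
Set Implicit Arguments. Unset Strict Implicit. Unset Printing Implicit Defensive.
Import Order.TTheory GRing.Theory Num.Theory.
Local Open Scope ring_scope.

Section Defs.
Variables (R : realType) (n : nat).
Local Notation vec := 'rV[R]_n.

Definition dotv (a b : vec) : R := \sum_(i < n) a ord0 i * b ord0 i.
Definition enorm (a : vec) : R := Num.sqrt (dotv a a).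

Definition convex_fun (g : vec -> R) : Prop :=
  forall x y t, 0 <= t <= 1 -> g (t *: x + (1 - t) *: y) <= t * g x + (1 - t) * g y.
Definition convex_set (S : vec -> Prop) : Prop :=
  forall x y t, S x -> S y -> 0 <= t <= 1 -> S (t *: x + (1 - t) *: y).
Definition closed_set (S : vec -> Prop) : Prop :=
  forall p, (forall e, 0 < e -> exists w, S w /\ enorm (w - p) < e) -> S p.
Definition interior_pt (S : vec -> Prop) (y : vec) : Prop :=
  exists e, 0 < e /\ forall w, enorm (w - y) < e -> S w.
Definition continuous_fun (g : vec -> R) : Prop :=
  forall x e, 0 < e -> exists d, 0 < d /\ forall w, enorm (w - x) < d -> `|g w - g x| < e.

Definition sublevel (g : vec -> R) : vec -> Prop := fun x => g x <= 0.
Definition feasible m (fs : 'I_m -> vec -> R) : vec -> Prop :=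
  fun x => forall j, fs j x <= 0.
Definition W1 (x : vec) (S : vec -> Prop) (a : vec) : Prop :=
  enorm a = 1 /\ forall w, S w -> dotv a (w - x) <= 0.
Definition halfspaces (z : vec) (As : seq vec) : vec -> Prop :=
  fun x => forall a, a \in As -> dotv a (x - z) <= 0.

Definition is_min_value (f : vec -> R) (D : vec -> Prop) (fstar : R) : Prop :=
  (exists x, D x /\ f x = fstar) /\ forall y, D y -> fstar <= f y.
Definition Xstar (f : vec -> R) (D : vec -> Prop) (fstar : R) : vec -> Prop :=
  fun x => D x /\ f x = fstar.

Definition cluster_point (x : nat -> vec) (p : vec) : Prop :=
  forall e, 0 < e -> forall N, exists k, (N <= k)%N /\ enorm (x k - p) < e.

(* A run of Method 1.4: all the choices made by the method.
   M k = M_k, y j = y^j, x k = x_k, z k j = z_k^j, A k j = A_k^j, u k j = u_k^j,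
   jk k = j_k, lk k = l_k.  Constraints on z k j, A k j, u k j only for j in J_k. *)
Definition method14_run m (fs : 'I_m -> vec -> R) (f : vec -> R) (fstar : R)
  (M : nat -> vec -> Prop) (y : 'I_m -> vec) (q : R) (x : nat -> vec)
  (z u : nat -> 'I_m -> vec) (A : nat -> 'I_m -> seq vec) (jk lk : nat -> 'I_m) : Prop :=
  let D := feasible fs in
  let Jk k j := ~ sublevel (fs j) (x k) in
  let Mkj k j w := M k w /\ halfspaces (z k j) (A k j) w in
  closed_set (M 0) /\ convex_set (M 0) /\ (exists xs, M 0 xs /\ Xstar f D fstar xs) /\
  (forall j, interior_pt (sublevel (fs j)) (y j)) /\ 1 <= q /\
  M 0 (x 0) /\ f (x 0) <= fstar /\
  (* iteration k (Step 1's stop test is handled by the non-termination hypothesis) *)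
  forall k,
    (* Steps 3 and 4 *)
    (forall j, Jk k j ->
       (exists t, 0 < t < 1 /\ z k j = (1 - t) *: y j + t *: x k) /\
       ~ interior_pt (sublevel (fs j)) (z k j) /\
       (exists qq, 1 <= qq <= q /\ sublevel (fs j) (x k + qq *: (z k j - x k))) /\
       A k j != [::] /\
       (forall a, a \in A k j -> W1 (z k j) (sublevel (fs j)) a) /\
       Mkj k j (u k j) /\ f (u k j) <= fstar) /\
    (* Step 5 *)
    (Jk k (jk k) /\ forall j, Jk k j -> enorm (x k - z k j) <= enorm (x k - z k (jk k))) /\
    (* Step 6 *)
    (Jk k (lk k) /\ Mkj k (jk k) (u k (lk k)) /\
       forall j, Jk k j -> Mkj k (jk k) (u k j) -> f (u k j) <= f (u k (lk k))) /\
    (* Step 7 *)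
    (forall w, M k.+1 w <-> (Mkj k (jk k) w /\ halfspaces (z k (lk k)) (A k (lk k)) w)) /\
    x k.+1 = u k (lk k).

End Defs.

(* Main.v *)
Require Import Defs.
From mathcomp Require Import all_boot all_order all_algebra.
From mathcomp Require Import reals ring lra.
Import Order.TTheory GRing.Theory Num.Theory.
Local Open Scope ring_scope.
Set Implicit Arguments.

Section Aux.
Variables (R : realType) (n : nat).
Local Notation vec := 'rV[R]_n.
Implicit Types (a b c v w : vec).

Lemma dotvC a b : dotv a b = dotv b a.
Proof. by rewrite /dotv; apply: eq_bigr => i _; rewrite mulrC. Qed.
Lemma dotvDr a b c : dotv a (b + c) = dotv a b + dotv a c.
Proof. by rewrite /dotv -big_split; apply: eq_bigr => i _; rewrite mxE mulrDr. Qed.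
Lemma dotvZr a b s : dotv a (s *: b) = s * dotv a b.
Proof. by rewrite /dotv mulr_sumr; apply: eq_bigr => i _; rewrite mxE mulrCA. Qed.
Lemma dotvNr a b : dotv a (- b) = - dotv a b.
Proof. by rewrite -scaleN1r dotvZr mulN1r. Qed.
Lemma dotvBr a b c : dotv a (b - c) = dotv a b - dotv a c.
Proof. by rewrite dotvDr dotvNr. Qed.
Lemma dotvDl a b c : dotv (b + c) a = dotv b a + dotv c a.
Proof. by rewrite dotvC dotvDr !(dotvC a). Qed.
Lemma dotvZl a b s : dotv (s *: b) a = s * dotv b a.
Proof. by rewrite dotvC dotvZr dotvC. Qed.
Lemma dotvBl a b c : dotv (b - c) a = dotv b a - dotv c a.
Proof. by rewrite dotvC dotvBr !(dotvC a). Qed.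
Lemma dotv_ge0 a : 0 <= dotv a a.
Proof. by apply: sumr_ge0 => i _; rewrite -expr2 sqr_ge0. Qed.
Lemma dotv0 a : dotv a a = 0 -> a = 0.
Proof.
move=> h; apply/rowP => i; rewrite !mxE.
have H0 : forall j : 'I_n, predT j -> 0 <= a ord0 j * a ord0 j.
  by move=> j _; rewrite -expr2 sqr_ge0.
have := @psumr_eq0P R _ predT (fun j => a ord0 j * a ord0 j) H0 h i isT.
by move=> /= /eqP; rewrite mulf_eq0 orbb => /eqP.
Qed.
Lemma dotv0l a : dotv 0 a = 0.
Proof. by rewrite /dotv big1 // => i _; rewrite mxE mul0r. Qed.
Lemma enorm_ge0 a : 0 <= enorm a.
Proof. exact: sqrtr_ge0. Qed.
Lemma enorm_sq a : enorm a ^+ 2 = dotv a a.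
Proof. by rewrite /enorm sqr_sqrtr // dotv_ge0. Qed.
Lemma enormZ s a : enorm (s *: a) = `|s| * enorm a.
Proof.
by rewrite /enorm dotvZl dotvZr mulrA -expr2 sqrtrM ?sqr_ge0 // sqrtr_sqr.
Qed.
Lemma enormN a : enorm (- a) = enorm a.
Proof. by rewrite -scaleN1r enormZ normrN normr1 mul1r. Qed.
Lemma enormB a b : enorm (a - b) = enorm (b - a).
Proof. by rewrite -enormN opprB. Qed.

Lemma CS a b : dotv a b <= enorm a * enorm b.
Proof.
have [A0|Apos] := eqVneq (enorm a) 0.
  have : dotv a a = 0 by rewrite -enorm_sq A0 expr2 mulr0.
  by move/dotv0 => ->; rewrite dotv0l mulr_ge0 ?enorm_ge0.
have [B0|Bpos] := eqVneq (enorm b) 0.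
  have : dotv b b = 0 by rewrite -enorm_sq B0 expr2 mulr0.
  by move/dotv0 => ->; rewrite dotvC dotv0l mulr_ge0 ?enorm_ge0.
set A := enorm a; set B := enorm b.
have hA : 0 < A by rewrite lt_def Apos enorm_ge0.
have hB : 0 < B by rewrite lt_def Bpos enorm_ge0.
have h := dotv_ge0 (B *: a - A *: b).
rewrite !(dotvBl, dotvBr, dotvZl, dotvZr) -!enorm_sq -/A -/B (dotvC b a) in h.
have hAB : 0 < A * B by rewrite mulr_gt0.
nra.
Qed.

Lemma CS1 a b : enorm a = 1 -> dotv a b <= enorm b.
Proof. by move=> h; have := CS a b; rewrite h mul1r. Qed.

Lemma enormD a b : enorm (a + b) <= enorm a + enorm b.
Proof.
have h1 := enorm_sq (a + b). have h2 := enorm_sq a. have h3 := enorm_sq b.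
rewrite !(dotvDl, dotvDr) (dotvC b a) in h1.
have := CS a b. have := enorm_ge0 (a + b). have := enorm_ge0 a. have := enorm_ge0 b.
rewrite !expr2 in h1 h2 h3.
set X := enorm (a + b) in h1 *. set Y := enorm a in h2 *. set Z := enorm b in h3 *.
nra.
Qed.

Lemma enorm_tri a b c : enorm (a - c) <= enorm (a - b) + enorm (b - c).
Proof. by have := enormD (a - b) (b - c); rewrite addrA subrK. Qed.


Lemma seg (g : vec -> R) (y p : vec) (r : R) :
  convex_fun g -> 0 < r -> (forall w, enorm (w - y) < r -> g w <= 0) ->
  (forall e, 0 < e -> exists w, g w <= 0 /\ enorm (w - p) < e) -> g p <= 0.
Proof.
move=> cg r0 hy hp.
have A : forall l, 0 < l < 1 -> g (l *: y + (1 - l) *: p) <= 0.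
  move=> l /andP[l0 l1].
  have [w [gw wp]] := hp (l * r) (mulr_gt0 l0 r0).
  set y' := y + ((1 - l) / l) *: (p - w).
  have E : l *: y + (1 - l) *: p = l *: y' + (1 - l) *: w.
    apply/rowP => i; rewrite !mxE; field; by rewrite gt_eqF.
  have gy' : g y' <= 0.
    apply: hy; rewrite /y' addrC addKr enormZ enormB.
    have hq : 0 <= (1 - l) / l by rewrite divr_ge0 // ?subr_ge0 ?ltW.
    rewrite ger0_norm //.
    have -> : (1 - l) / l * enorm (w - p) = (1 - l) * (enorm (w - p) / l) by rewrite mulrAC mulrA.
    have : enorm (w - p) / l < r by rewrite ltr_pdivrMr // mulrC.
    have := enorm_ge0 (w - p). move=> h0 h1.
    have h2 : 0 <= enorm (w - p) / l by rewrite divr_ge0 // ltW.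
    nra.
  rewrite E; apply: le_trans (cg _ _ _ _) _.
    by rewrite ltW //= ltW.
  nra.
apply/negPn/negP; rewrite -ltNge => gp0.
set p2 := 2%:R *: p - y.
set G := Num.max (g p2) 0.
have G0 : 0 <= G by rewrite le_max lexx orbT.
have Gp2 : g p2 <= G by rewrite le_max lexx.
set l := g p / (g p + G + 1).
have hD : 0 < g p + G + 1 by lra.
have l0 : 0 < l by rewrite divr_gt0.
have l1 : l < 1 by rewrite /l ltr_pdivrMr // mul1r; lra.
have lG : l * G < g p.
  rewrite /l mulrAC ltr_pdivrMr // mulrDr mulrDr mulr1; nra.
set t := (1 + l)^-1.
have t0 : 0 < t by rewrite invr_gt0 addr_gt0.
have t1 : t <= 1 by rewrite invr_le1 ?unitfE ?gt_eqF ?addr_gt0 // lerDl ltW.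
have E : p = t *: (l *: y + (1 - l) *: p) + (1 - t) *: p2.
  apply/rowP => i; rewrite /t /p2 !mxE; field; rewrite gt_eqF // addr_gt0 //.
have h1 : g (l *: y + (1 - l) *: p) <= 0 by apply: A; rewrite l0 l1.
have := cg (l *: y + (1 - l) *: p) p2 t; rewrite -E ltW //= t1 => /(_ isT) h.
have ht : 1 - t <= l.
  have : t * (1 + l) = 1 by rewrite mulVf // gt_eqF // addr_gt0.
  nra.
have ht0 : 0 <= 1 - t by rewrite subr_ge0.
nra.
Qed.

End Aux.
Arguments dotvC {R n}.
Arguments dotvDr {R n}.
Arguments dotvZr {R n}.
Arguments dotvNr {R n}.
Arguments dotvBr {R n}.
Arguments dotvDl {R n}.
Arguments dotvZl {R n}.
Arguments dotvBl {R n}.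
Arguments dotv_ge0 {R n}.
Arguments dotv0 {R n}.
Arguments dotv0l {R n}.
Arguments enorm_ge0 {R n}.
Arguments enorm_sq {R n}.
Arguments enormZ {R n}.
Arguments enormN {R n}.
Arguments enormB {R n}.
Arguments CS {R n}.
Arguments CS1 {R n}.
Arguments enormD {R n}.
Arguments enorm_tri {R n}.
Arguments seg {R n}.

Lemma fin_lb (R : realType) m (P : 'I_m -> R -> Prop) :
  (forall j, exists e, 0 < e /\ P j e) ->
  (forall j e e', 0 < e' -> e' <= e -> P j e -> P j e') ->
  exists e, 0 < e /\ forall j, P j e.
Proof.
move=> h dc.
suff : forall s : seq 'I_m, exists e, 0 < e /\ forall j, j \in s -> P j e.
  by case/(_ (enum 'I_m)) => e [e0 he]; exists e; split => // j; apply: he; rewrite mem_enum.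
elim => [|j s [e [e0 he]]]; first by exists 1; split => //.
have [e1 [e10 he1]] := h j.
exists (Num.min e e1); split; first by rewrite lt_min e0 e10.
move=> i; rewrite inE => /orP[/eqP->|ins].
  by apply: dc he1; rewrite ?lt_min ?e0 ?e10 // ge_min lexx orbT.
by apply: dc (he i ins); rewrite ?lt_min ?e0 ?e10 // ge_min lexx.
Qed.

Lemma fin_ub (R : realType) m (F : 'I_m -> R) :
  exists Y, 0 <= Y /\ forall j, F j <= Y.
Proof.
suff : forall s : seq 'I_m, exists Y, 0 <= Y /\ forall j, j \in s -> F j <= Y.
  by case/(_ (enum 'I_m)) => e [e0 he]; exists e; split => // j; apply: he; rewrite mem_enum.
elim => [|j s [e [e0 he]]]; first by exists 0; split => //.
exists (Num.max e (F j)); split; first by rewrite le_max e0.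
move=> i; rewrite inE => /orP[/eqP->|ins]; first by rewrite le_max lexx orbT.
by rewrite le_max he.
Qed.

Section Main.
Variables (R : realType) (m n : nat)
  (fs : 'I_m -> 'rV[R]_n -> R) (f : 'rV[R]_n -> R) (fstar : R)
  (M : nat -> 'rV[R]_n -> Prop) (y : 'I_m -> 'rV[R]_n) (q : R)
  (x : nat -> 'rV[R]_n) (z u : nat -> 'I_m -> 'rV[R]_n)
  (A : nat -> 'I_m -> seq 'rV[R]_n) (jk lk : nat -> 'I_m).
Hypothesis run : method14_run fs f fstar M y q x z u A jk lk.


Let step := let: conj _ (conj _ (conj _ (conj _ (conj _ (conj _ (conj _ st)))))) := run in st.
Let Mx0 : M 0 (x 0).
Proof. by move: run => [_ [_ [_ [_ [_ [h _]]]]]]. Qed.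
Let fx0 : f (x 0) <= fstar.
Proof. by move: run => [_ [_ [_ [_ [_ [_ [h _]]]]]]]. Qed.

Lemma fx_le k : f (x k) <= fstar.
Proof.
case: k => [|k]; first exact: fx0.
have [S34 [[S5a S5b] [[S6a [S6b S6c]] [S7 S8]]]] := step k.
by rewrite S8; have [_ [_ [_ [_ [_ [_ h]]]]]] := S34 _ S6a.
Qed.

Lemma xM k : M k (x k).
Proof.
case: k => [|k]; first exact: Mx0.
have [S34 [[S5a S5b] [[S6a [S6b S6c]] [S7 S8]]]] := step k.
rewrite S8; apply/S7; split => //.
by have [_ [_ [_ [_ [_ [[_ h] _]]]]]] := S34 _ S6a.
Qed.

Lemma Mmono k d w : M (k + d) w -> M k w.
Proof.
elim: d => [|d IH]; first by rewrite addn0.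
rewrite addnS => h; apply: IH.
have [S34 [[S5a S5b] [[S6a [S6b S6c]] [S7 S8]]]] := step (k + d)%N.
by have [[h1 _] _] := (S7 w).1 h.
Qed.

Lemma half k l : (k < l)%N -> halfspaces (z k (jk k)) (A k (jk k)) (x l).
Proof.
move=> kl.
have h : M k.+1 (x l) by apply: (@Mmono _ (l - k.+1)); rewrite subnKC //; apply: xM.
have [S34 [[S5a S5b] [[S6a [S6b S6c]] [S7 S8]]]] := step k.
by have [[_ h1] _] := (S7 _).1 h.
Qed.

Lemma key k l r Cb : 0 < r -> 0 < Cb ->
  (forall j w, enorm (w - y j) < r -> fs j w <= 0) ->
  (forall k j, enorm (x k - y j) <= Cb) ->
  (k < l)%N -> (r / (2 * Cb)) * enorm (x k - z k (jk k)) <= enorm (x k - x l).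
Proof.
move=> r0 C0 hr hC kl.
have [S34 [[S5a S5b] [[S6a [S6b S6c]] [S7 S8]]]] := step k.
set j := jk k in S5a *.
have [[t [/andP[t0 t1] zeq]] [_ [_ [Ane [W _]]]]] := S34 _ S5a.
set a := head 0 (A k j).
have ain : a \in A k j by rewrite /a; case: (A k j) Ane => // b s _; rewrite mem_head.
have [a1 aW] := W a ain.
set xx := x k. set zz := z k j. set yy := y j.
have hw : dotv a (yy + (r / 2) *: a - zz) <= 0.
  apply: aW; rewrite /sublevel; apply: hr.
  rewrite addrC addKr enormZ a1 mulr1 ger0_norm ?divr_ge0 ?ltW //.
  by rewrite ltr_pdivrMr // ltr_pMr // ltr1n.
have E1 : yy + (r / 2) *: a - zz = (yy - zz) + (r / 2) *: a.
  by rewrite addrAC.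
have aa : dotv a a = 1 by rewrite -enorm_sq a1 expr1n.
rewrite E1 dotvDr dotvZr aa mulr1 in hw.
have E2 : t *: (xx - zz) = (1 - t) *: (zz - yy).
  by apply/rowP => i; rewrite /zz zeq !mxE; ring.
have hD : t * dotv a (xx - zz) = (1 - t) * dotv a (zz - yy).
  by rewrite -!dotvZr E2.
have E3 : zz - yy = - (yy - zz) by rewrite opprB.
rewrite E3 dotvNr in hD.
have E4 : xx - zz = (1 - t) *: (xx - yy).
  by apply/rowP => i; rewrite /zz zeq !mxE; ring.
have hN : enorm (xx - zz) = (1 - t) * enorm (xx - yy).
  by rewrite E4 enormZ ger0_norm // subr_ge0 ltW.
have hl : dotv a (x l - zz) <= 0.
  by have := @half k l kl; move/(_ a ain).
have E5 : xx - x l = (xx - zz) - (x l - zz).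
  by rewrite opprB addrA subrK.
have hcs := @CS1 R n a (xx - x l) a1.
rewrite E5 dotvBr in hcs. rewrite E5.
have hx := hC k j. rewrite -/xx -/yy in hx.
have cC : r / (2 * Cb) * Cb = r / 2.
  by field; rewrite gt_eqF.
have c0 : 0 <= r / (2 * Cb) by rewrite divr_ge0 ?mulr_ge0 ?ltW.
set c := r / (2 * Cb) in cC c0 *.
set D1 := dotv a (xx - zz) in hD hcs *.
set D2 := dotv a (yy - zz) in hw hD.
set Nx := enorm (xx - yy) in hx hN.
have hnx : 0 <= Nx by apply: enorm_ge0.
rewrite hN.
have h1 : c * ((1 - t) * Nx) <= c * ((1 - t) * Cb).
  by apply: ler_wpM2l => //; apply: ler_wpM2l => //; rewrite subr_ge0 ltW.
have h2 : c * ((1 - t) * Cb) = (1 - t) * (r / 2) by rewrite mulrCA cC.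
have h3 : (1 - t) * (r / 2) <= t * D1.
  by rewrite hD; apply: ler_wpM2l; [rewrite subr_ge0 ltW | lra].
have h4 : 0 <= (1 - t) * (r / 2).
  by apply: mulr_ge0; [rewrite subr_ge0 ltW | rewrite divr_ge0 // ltW].
have hD1 : (1 - t) * (r / 2) <= D1 by nra.
lra.
Qed.

End Main.

Unset Implicit Arguments.

Theorem theorem1p4p1 (R : realType) (m n : nat)
  (fs : 'I_m -> 'rV[R]_n -> R) (f : 'rV[R]_n -> R) (fstar : R)
  (M : nat -> 'rV[R]_n -> Prop) (y : 'I_m -> 'rV[R]_n) (q : R)
  (x : nat -> 'rV[R]_n) (z u : nat -> 'I_m -> 'rV[R]_n)
  (A : nat -> 'I_m -> seq 'rV[R]_n) (jk lk : nat -> 'I_m) :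
  (forall j, convex_fun (fs j)) ->
  continuous_fun f ->
  is_min_value f (feasible fs) fstar ->
  method14_run fs f fstar M y q x z u A jk lk ->
  (forall k, ~ feasible fs (x k)) ->
  (exists B, forall k, enorm (x k) <= B) ->
  forall p, cluster_point x p -> Xstar f (feasible fs) fstar p.
Proof.
move=> cvx fcont hmin run nfeas [B hB] p clp.
move: (run) => [_ [_ [_ [hyint [q1 [_ [_ step]]]]]]].
have [r [r0 hr]] := @fin_lb R m (fun j e => forall w, enorm (w - y j) < e -> fs j w <= 0)
  (fun j => hyint j) (fun j e e' h0 h1 h w hw => h w (lt_le_trans hw h1)).
have [Y [Y0 hY]] := @fin_ub R m (fun j => enorm (y j)).
have B0 : 0 <= B by apply: le_trans (hB 0%N); apply: enorm_ge0.
set Cb := B + Y + 1.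
have C0 : 0 < Cb by rewrite /Cb; lra.
have hC : forall k j, enorm (x k - y j) <= Cb.
  move=> k j; apply: le_trans (enormD (x k) (- y j)) _; rewrite enormN.
  have := hB k; have := hY j; rewrite /Cb; lra.
set c := r / (2 * Cb).
have c0 : 0 < c by rewrite divr_gt0 // mulr_gt0.
have q0 : 0 < q by lra.
have hDp : feasible fs p.
  move=> j; apply: (@seg R n (fs j) (y j) p r (cvx j) r0 (hr j)) => e e0.
  set K := 1 + 2 * q / c.
  have K1 : 1 <= K.
    by rewrite /K lerDl; apply: divr_ge0; [apply: mulr_ge0; lra | exact: ltW].
  set d := e / K.
  have K0 : 0 < K by lra.
  have d0 : 0 < d by rewrite divr_gt0.
  have dK : d * K = e by rewrite /d mulrVK // unitfE gt_eqF.
  have [k [_ hk]] := clp d d0 0%N.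
  have [l [kl hl]] := clp d d0 k.+1.
  have hkl : enorm (x k - x l) < 2 * d.
    apply: le_lt_trans (enorm_tri _ p _) _; rewrite (enormB p); lra.
  have hkey := key run k l r Cb r0 C0 hr hC kl.
  rewrite -/c in hkey.
  have [hj|hj] := lerP (fs j (x k)) 0.
    exists (x k); split => //.
    have : d <= e by rewrite -dK ler_peMr // ltW.
    lra.
  have Jk : ~ sublevel (fs j) (x k) by rewrite /sublevel; apply/negP; rewrite -ltNge.
  have [S34 [[S5a S5b] _]] := step k.
  have [_ [_ [[qq [/andP[qq1 qqq] hw]] _]]] := S34 j Jk.
  exists (x k + qq *: (z k j - x k)); split; first exact: hw.
  apply: le_lt_trans (enorm_tri _ (x k) _) _.
  have -> : x k + qq *: (z k j - x k) - x k = qq *: (z k j - x k) by rewrite addrAC subrr add0r.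
  rewrite enormZ ger0_norm; last lra.
  rewrite enormB.
  have hN := S5b j Jk.
  set N := enorm (x k - z k (jk k)) in hkey hN.
  set Nj := enorm (x k - z k j) in hN *.
  have Nj0 : 0 <= Nj by apply: enorm_ge0.
  have h1 : N < 2 * d / c by rewrite ltr_pdivlMr // mulrC; lra.
  have h2 : qq * Nj <= q * N.
    apply: le_trans (ler_wpM2r Nj0 qqq) _; apply: ler_wpM2l; lra.
  have h3 : q * N <= q * (2 * d / c) by apply: ler_wpM2l; lra.
  have h4 : q * (2 * d / c) = d * (K - 1).
    by rewrite /K addrAC subrr add0r; field; rewrite gt_eqF.
  have h5 : d * (K - 1) = e - d by rewrite mulrBr mulr1 dK.
  lra.
split => //.
have [_ hmin2] := hmin.
apply/eqP; rewrite eq_le (hmin2 _ hDp) andbT.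
rewrite leNgt; apply/negP => hlt.
have hpos : 0 < f p - fstar by lra.
have [dd [dd0 hdd]] := fcont p (f p - fstar) hpos.
have [k [_ hk]] := clp dd dd0 0%N.
have := hdd (x k) hk; have := fx_le run k.
rewrite ltr_norml; lra.
Qed.
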